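(* Let $U,V$ be molecules, $F\colon\mathsf{Mol}/U\to\mathsf{Mol}/V$ an active strict functor, and $\iota\colon W\sqsubseteq U$ a submolecule (regarded as an arrow of $\mathsf{Mol}/U$). Then the pasting diagram $F(\iota)\colon F(W)\to V$ is a submolecule inclusion.
   Context: Oriented graded posets: graded posets with, for each $x$, a partition of the elements covered by $x$ into input faces $\partial^-x$ and output faces $\partial^+x$; morphisms induce bijections on input/output faces; embeddings are injective morphisms. Molecules are Hadzihasanovic's class generated from the point $\mathbf{1}$ under pasting $U\#_kV$ (pushout along an isomorphism $\partial_k^+U\cong\partial_k^-V$ of boundaries) and under $U\Rightarrow V$ for round molecules of equal dimension with matching boundaries. Submolecule inclusions form the smallest class of embeddings of molecules containing isomorphisms, closed under composition, and containing $U\hookrightarrow U\#_kV$ and $V\hookrightarrow U\#_kV$; $W\sqsubseteq U$ means the inclusion of $W$ is one. $\mathsf{Mol}/U$ is the strict $\omega$-category whose $k$-arrows are morphisms $W\to U$ of oriented graded posets from $k$-dimensional molecules (pasting diagrams, up to unique isomorphism), boundaries by restriction, composition by pasting; the arrow $F(\iota)$ is written $F(W)\to V$. A strict functor $F\colon\mathsf{Mol}/U\to\mathsf{Mol}/V$ is active if $F(\mathrm{id}_U)=\mathrm{id}_V$. *)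

(* Defs.v *)
From HB Require Import structures.
From mathcomp Require Import all_boot.

Set Implicit Arguments.
Unset Strict Implicit.
Unset Printing Implicit Defensive.

(* The poset is presented by its Hasse
   diagram: [og_in y x] means y is an input face of x (y ∈ Δ⁻x),
   [og_out y x] means y is an output face of x (y ∈ Δ⁺x). *)
Record ogpos := Ogpos {
  og_car :> finType;
  og_in : rel og_car;
  og_out : rel og_car;
  og_dim : og_car -> nat;
  og_disj : forall x y : og_car, ~~ (og_in y x && og_out y x);
  og_dimS : forall x y : og_car, og_in y x || og_out y x -> og_dim x = (og_dim y).+1;
  og_dim0 : forall x : og_car, 0 < og_dim x -> exists y, og_in y x || og_out y x
}.

Section OgposDefs.
Variable P : ogpos.

(* orientation: b = true is "+", b = false is "-" *)
Definition face (b : bool) (y x : P) : bool :=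
  if b then og_out y x else og_in y x.

Definition cov (y x : P) : bool := og_in y x || og_out y x.

(* le y x : y <= x *)
Definition le (y x : P) : bool := connect (fun a b : P => cov b a) x y.

Definition closed (S : {set P}) : Prop :=
  forall x y : P, x \in S -> cov y x -> y \in S.

Definition clos (A : {set P}) : {set P} :=
  [set y | [exists x in A, le y x]].

Definition maxel (S : {set P}) (x : P) : bool :=
  (x \in S) && [forall y in S, le x y ==> (y == x)].

Definition Delta (n : nat) (b : bool) (S : {set P}) : {set P} :=
  [set x in S | (og_dim x == n) && [forall y in S, ~~ face (~~ b) x y]].

Definition bd (n : nat) (b : bool) (S : {set P}) : {set P} :=
  clos (Delta n b S :|: [set x in S | maxel S x && (og_dim x < n)]).

(* ∂_{n-1}^α S, with ∂_{-1}^α S = ∅ *)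
Definition bdp (n : nat) (b : bool) (S : {set P}) : {set P} :=
  if n is n'.+1 then bd n' b S else set0.

Definition dimS (S : {set P}) : nat := \max_(x in S) og_dim x.

Definition round (S : {set P}) : Prop :=
  forall k, k < dimS S ->
    bd k false S :&: bd k true S = bdp k false S :|: bdp k true S.

(* Molecules, as closed subsets of the ambient ogposet P.  Since pushouts
   of ogposets along inclusions of closed subsets are computed as unions,
   U #_k V is recognised internally as a union A ∪ B of closed subsets with
   A ∩ B = ∂_k^+ A = ∂_k^- B, and U ⇒ V as A ∪ B ∪ {t} where A ∩ B = ∂A = ∂B
   and Δ⁻t, Δ⁺t are the top-dimensional elements of A, B. *)
Inductive mol : {set P} -> Prop :=
| mol_point (x : P) : og_dim x = 0 -> mol [set x]
| mol_paste (k : nat) (A B : {set P}) :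
    mol A -> mol B ->
    A :&: B = bd k true A -> A :&: B = bd k false B ->
    mol (A :|: B)
| mol_arrow (n : nat) (A B : {set P}) (t : P) :
    mol A -> mol B -> round A -> round B ->
    dimS A = n -> dimS B = n ->
    bdp n false A = bdp n false B -> bdp n true A = bdp n true B ->
    A :&: B = bdp n false A :|: bdp n true A ->
    t \notin A :|: B ->
    (forall y, og_in y t = (y \in A) && (og_dim y == n)) ->
    (forall y, og_out y t = (y \in B) && (og_dim y == n)) ->
    mol (t |: (A :|: B)).

End OgposDefs.

Definition ismol (P : ogpos) : Prop := mol (P := P) setT.

Section Sub.
Variables (P : ogpos) (S : {set P}).

Lemma clos_closed (x y : P) : x \in clos S -> cov y x -> y \in clos S.
Proof.
rewrite !inE => /existsP [z /andP [zS lexz]] cyx.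
apply/existsP; exists z; rewrite zS /=.
rewrite /le; apply: connect_trans lexz _; exact: connect1.
Qed.

Definition subT : finType := {x : P | x \in clos S}.
Definition sub_in : rel subT := fun y x => og_in (val y) (val x).
Definition sub_out : rel subT := fun y x => og_out (val y) (val x).
Definition sub_dim (x : subT) : nat := og_dim (val x).

Lemma sub_disj (x y : subT) : ~~ (sub_in y x && sub_out y x).
Proof. exact: og_disj. Qed.

Lemma sub_dimS (x y : subT) : sub_in y x || sub_out y x -> sub_dim x = (sub_dim y).+1.
Proof. exact: og_dimS. Qed.

Lemma sub_dim0 (x : subT) : 0 < sub_dim x -> exists y, sub_in y x || sub_out y x.
Proof.
move=> /og_dim0 [y cy].
have yS : y \in clos S by apply: (clos_closed (valP x)).
by exists (exist _ y yS).
Qed.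

Definition subog : ogpos := Ogpos sub_disj sub_dimS sub_dim0.

Definition subincl : subog -> P := fun x => val x.
End Sub.

Definition is_morph (P Q : ogpos) (f : P -> Q) : Prop :=
  forall (b : bool) (x : P),
    [/\ (forall y, face b y x -> face b (f y) (f x)),
        (forall y1 y2, face b y1 x -> face b y2 x -> f y1 = f y2 -> y1 = y2)
      & (forall z, face b z (f x) -> exists2 y, face b y x & f y = z)].

Definition og_iso (P Q : ogpos) (f : P -> Q) : Prop :=
  is_morph f /\ bijective f.

Definition paste_decomp (Q : ogpos) (k : nat) (A B : {set Q}) : Prop :=
  [/\ mol A, mol B, A :|: B = setT, A :&: B = bd k true A & A :&: B = bd k false B].

Inductive subinc : forall (P Q : ogpos), (P -> Q) -> Prop :=
| subinc_iso (P Q : ogpos) (f : P -> Q) :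
    ismol P -> ismol Q -> og_iso f -> subinc f
| subinc_comp (P Q R : ogpos) (f : P -> Q) (g : Q -> R) :
    subinc f -> subinc g -> subinc (g \o f)
| subinc_pasteL (Q : ogpos) (k : nat) (A B : {set Q}) :
    paste_decomp k A B -> subinc (@subincl Q A)
| subinc_pasteR (Q : ogpos) (k : nat) (A B : {set Q}) :
    paste_decomp k A B -> subinc (@subincl Q B).

Definition submolecule (W U : ogpos) (f : W -> U) : Prop := subinc f.

(* The strict omega-category Mol/U, as a single set of cells (pasting
   diagrams W -> U, taken up to isomorphism over U) with boundary operators
   and pasting. *)
Definition cell (U : ogpos) : Type := {W : ogpos & W -> U}.

Definition cdom (U : ogpos) (c : cell U) : ogpos := projT1 c.
Definition cmap (U : ogpos) (c : cell U) : cdom c -> U := projT2 c.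
Arguments cmap {U} c _.

Definition mkcell (U W : ogpos) (f : W -> U) : cell U :=
  existT (fun W : ogpos => W -> U) W f.

Definition isCell (U : ogpos) (c : cell U) : Prop :=
  ismol (cdom c) /\ is_morph (cmap c).

Definition restr (U : ogpos) (c : cell U) (S : {set cdom c}) : cell U :=
  mkcell (fun x : subog S => cmap c (val x)).

Definition csrc (U : ogpos) (k : nat) (c : cell U) : cell U :=
  restr (bd k false [set: cdom c]).
Definition ctgt (U : ogpos) (k : nat) (c : cell U) : cell U :=
  restr (bd k true [set: cdom c]).

Definition cell_iso (U : ogpos) (c d : cell U) : Prop :=
  exists g : cdom c -> cdom d, og_iso g /\ forall x, cmap d (g x) = cmap c x.

Definition IsComp (U : ogpos) (k : nat) (c d e : cell U) : Prop :=
  exists A B : {set cdom e},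
    [/\ closed A, closed B, A :|: B = setT,
        A :&: B = bd k true A & A :&: B = bd k false B] /\
    cell_iso (restr A) c /\ cell_iso (restr B) d.

(* strict functors Mol/U -> Mol/V: well defined on isomorphism classes,
   send cells to cells, and preserve boundaries and pasting
   (preservation of identities/dimension follows in this one-sorted
   presentation). *)
Definition strict_functor (U V : ogpos) (F : cell U -> cell V) : Prop :=
  [/\ forall c, isCell c -> isCell (F c),
      forall c d, isCell c -> isCell d -> cell_iso c d -> cell_iso (F c) (F d),
      forall k c, isCell c ->
        cell_iso (F (csrc k c)) (csrc k (F c)) /\ cell_iso (F (ctgt k c)) (ctgt k (F c))
    & forall k c d e, isCell c -> isCell d -> isCell e ->
        IsComp k c d e -> IsComp k (F c) (F d) (F e)].

Definition idcell (U : ogpos) : cell U := mkcell (fun x : U => x).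

Definition active (U V : ogpos) (F : cell U -> cell V) : Prop :=
  cell_iso (F (idcell U)) (idcell V).

(* Main.v *)
Require Import Defs.
From mathcomp Require Import all_boot.
From Stdlib Require Import FunctionalExtensionality.

Set Implicit Arguments.
Unset Strict Implicit.
Unset Printing Implicit Defensive.

Lemma le_step (P : ogpos) (y a x : P) : cov a x -> le y a -> le y x.
Proof. rewrite /le => h1 h2; apply: connect_trans h2; exact: connect1. Qed.

Lemma closed_le (P : ogpos) (S : {set P}) x y : Defs.closed S -> x \in S -> le y x -> y \in S.
Proof.
move=> cS + /connectP [p]; elim: p x => [|a p IH] x /= xS.
  by move=> _ ->.
case/andP=> cax pa ey; exact: (IH a (cS _ _ xS cax) pa ey).
Qed.

Lemma clos_closed_eq (P : ogpos) (S : {set P}) : Defs.closed S -> clos S = S.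
Proof.
move=> cS; apply/setP => y; rewrite inE; apply/existsP/idP.
  by case=> x /andP [xS lyx]; exact: closed_le lyx.
by move=> yS; exists y; rewrite yS; exact: connect0.
Qed.

Lemma closed_mol (P : ogpos) (S : {set P}) : mol S -> Defs.closed S.
Proof.
elim => {S}.
- move=> x dx x0 y; rewrite inE => /eqP -> /og_dimS; by rewrite dx.
- move=> k A B _ cA _ cB _ _ x y; rewrite !inE => /orP [xA|xB] cyx.
    by rewrite (cA x y xA cyx).
  by rewrite (cB x y xB cyx) orbT.
- move=> n A B t _ cA _ cB _ _ _ _ _ _ _ _ hin hout x y.
  rewrite !inE => /orP [/eqP ->|/orP [xA|xB]] cyx.
    case/orP: cyx => [|]; [rewrite hin | rewrite hout] => /andP [-> _]; by rewrite ?orbT.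
  by rewrite (cA x y xA cyx) orbT.
  by rewrite (cB x y xB cyx) !orbT.
Qed.

Definition cemb (P Q : ogpos) (f : P -> Q) :=
  [/\ injective f, (forall x, og_dim (f x) = og_dim x),
      (forall b x y, face b (f y) (f x) = face b y x)
    & (forall b x z, face b z (f x) -> exists y, z = f y)].

Section Transport.
Variables (P Q : ogpos) (f : P -> Q).
Hypothesis hf : cemb f.

Lemma finj : injective f. Proof. by case: hf. Qed.
Lemma fdim x : og_dim (f x) = og_dim x. Proof. by case: hf. Qed.
Lemma fface b x y : face b (f y) (f x) = face b y x. Proof. by case: hf. Qed.
Lemma fsurj b x z : face b z (f x) -> exists y, z = f y. Proof. by case: hf => _ _ _; apply. Qed.

Lemma fcov x y : cov (f y) (f x) = cov y x.
Proof. by have /= := fface true x y; have /= := fface false x y; rewrite /cov => -> ->. Qed.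

Lemma fcovS x z : cov z (f x) -> exists y, z = f y.
Proof. by case/orP => h; [apply: (@fsurj false) | apply: (@fsurj true)]; exact h. Qed.

Lemma fleS x z : le z (f x) -> exists2 y, z = f y & le y x.
Proof.
move=> /connectP [p]; elim: p x => [|a p IH] x /=.
  by move=> _ ->; exists x => //; exact: connect0.
case/andP=> cax pa ez; have [a0 ea] := fcovS cax; subst a.
have [y -> ly] := IH a0 pa ez; exists y => //.
by apply: (le_step (a := a0)) => //; rewrite -fcov.
Qed.

Lemma fle y x : le (f y) (f x) = le y x.
Proof.
apply/idP/idP.
  by case/fleS => y0 /finj ->.
move=> /connectP [p]; elim: p x => [|a p IH] x /=.
  by move=> _ ->; exact: connect0.
case/andP=> cax pa ey; apply: (le_step (a := f a)); first by rewrite fcov.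
exact: IH pa ey.
Qed.

Lemma clos_f (A : {set P}) : clos (f @: A) = f @: clos A.
Proof.
apply/setP => z; rewrite inE; apply/existsP/imsetP.
  case=> x' /andP [/imsetP [x xA ->] lz]; have [y -> ly] := fleS lz.
  by exists y => //; rewrite inE; apply/existsP; exists x; rewrite xA.
case=> y; rewrite inE => /existsP [x /andP [xA lyx]] ->.
by exists (f x); rewrite imset_f //= fle.
Qed.

Lemma maxel_f (S : {set P}) x : maxel (f @: S) (f x) = maxel S x.
Proof.
rewrite /maxel mem_imset; last exact: finj. congr andb.
apply/forallP/forallP => H y.
  apply/implyP => yS; apply/implyP => lxy.
  have := H (f y); rewrite imset_f // fle lxy /= (inj_eq finj); exact.
apply/implyP => /imsetP [y0 yS ->]; rewrite fle (inj_eq finj).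
by have := H y0; rewrite yS.
Qed.

Lemma Delta_f n b (S : {set P}) : Delta n b (f @: S) = f @: Delta n b S.
Proof.
apply/setP => z; apply/idP/imsetP.
  rewrite inE => /andP [/imsetP [x xS ->] /andP [dn /forallP H]].
  exists x => //; rewrite inE xS -fdim dn /=; apply/forallP => y.
  apply/implyP => yS; have := H (f y); by rewrite imset_f // fface.
case=> x; rewrite inE => /andP [xS /andP [dn /forallP H]] ->.
rewrite inE imset_f //= fdim dn /=; apply/forallP => y.
apply/implyP => /imsetP [y0 y0S ->]; rewrite fface.
by have := H y0; rewrite y0S.
Qed.

Lemma bd_f n b (S : {set P}) : bd n b (f @: S) = f @: bd n b S.
Proof.
rewrite /bd Delta_f -clos_f imsetU; congr (clos (_ :|: _)).
apply/setP => z; apply/idP/imsetP.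
  rewrite inE => /andP [/imsetP [x xS ->]]; rewrite maxel_f fdim => h.
  by exists x => //; rewrite inE xS.
case=> x; rewrite inE => /andP [xS h] ->.
by rewrite inE imset_f //= maxel_f fdim.
Qed.

Lemma bdp_f n b (S : {set P}) : bdp n b (f @: S) = f @: bdp n b S.
Proof. by case: n => [|n] /=; [rewrite imset0 | exact: bd_f]. Qed.

Lemma dimS_f (S : {set P}) : dimS (f @: S) = dimS S.
Proof.
rewrite /dimS big_imset /=; first by apply: eq_bigr => x _; exact: fdim.
by move=> x y _ _; exact: finj.
Qed.

Lemma round_f (S : {set P}) : round (f @: S) <-> round S.
Proof.
have fi : {in setT & setT, injective f} by move=> x y _ _; exact: finj.
rewrite /round dimS_f; split => H k /H; rewrite !bd_f !bdp_f.
  rewrite -imsetI; last by move=> x y _ _; exact: finj.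
  rewrite -imsetU; exact: (imset_inj finj).
rewrite -imsetI; last by move=> x y _ _; exact: finj.
by rewrite -imsetU => ->.
Qed.

Lemma face_img b t (A : {set P}) n :
  (forall y, face b y t = (y \in A) && (og_dim y == n)) ->
  forall y, face b y (f t) = (y \in f @: A) && (og_dim y == n).
Proof.
move=> H y; case Hy: (face b y (f t)).
  have [y0 e] := fsurj Hy; subst y; move: Hy; rewrite fface H => /andP [yA dn].
  by rewrite mem_imset; [rewrite fdim yA dn | exact: finj].
apply/esym/negbTE/negP => /andP [/imsetP [y0 y0A ey] dn]; subst y; move: Hy.
by rewrite fface H y0A -fdim dn.
Qed.

Lemma mol_f (S : {set P}) : mol S -> mol (f @: S).
Proof.
have fi (A B : {set P}) : {in A & B, injective f} by move=> x y _ _; exact: finj.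
elim => {S}.
- by move=> x dx; rewrite imset_set1; constructor; rewrite fdim.
- move=> k A B _ mA _ mB hA hB; rewrite imsetU.
  apply: (mol_paste (k := k)) mA mB _ _; rewrite -(imsetI (fi A B)) bd_f; [by rewrite hA | by rewrite hB].
- move=> n A B t _ mA _ mB rA rB dA dB e1 e2 e3 tn hin hout.
  rewrite imsetU1 imsetU.
  apply: (mol_arrow (n := n)) => //.
  + exact/round_f. + exact/round_f.
  + by rewrite dimS_f. + by rewrite dimS_f.
  + by rewrite !bdp_f e1. + by rewrite !bdp_f e2.
  + by rewrite -(imsetI (fi A B)) !bdp_f -imsetU e3.
  + by rewrite -imsetU mem_imset //; exact: finj.
  + exact: (face_img (b := false)).
  + exact: (face_img (b := true)).
Qed.

Lemma img_pre (A : {set Q}) (S : {set P}) : A \subset f @: S -> f @: (f @^-1: A) = A.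
Proof.
move=> sA; apply/setP => z; apply/imsetP/idP.
  by case=> x; rewrite inE => xA ->.
move=> zA; have := subsetP sA z zA => /imsetP [x _ ez].
by exists x => //; rewrite inE -ez.
Qed.

Lemma mol_fV_aux (T : {set Q}) : mol T -> forall S : {set P}, T = f @: S -> mol S.
Proof.
have fi (A B : {set P}) : {in A & B, injective f} by move=> x y _ _; exact: finj.
elim => {T}.
- move=> x dx S e.
  have : x \in f @: S by rewrite -e set11.
  case/imsetP => y _ ex; subst x; rewrite -imset_set1 in e.
  rewrite -(imset_inj finj e); constructor; by rewrite -fdim.
- move=> k A B _ IHA _ IHB hA hB S e.
  have sA : A \subset f @: S by rewrite -e subsetUl.
  have sB : B \subset f @: S by rewrite -e subsetUr.
  have eA := img_pre sA; have eB := img_pre sB.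
  move: (f @^-1: A) (f @^-1: B) eA eB => A0 B0 eA eB; subst A B.
  rewrite -(imsetI (fi A0 B0)) bd_f in hA; rewrite -(imsetI (fi A0 B0)) bd_f in hB.
  rewrite -imsetU in e; rewrite -(imset_inj finj e).
  apply: (mol_paste (k := k)); [exact: IHA | exact: IHB | |].
  exact: (imset_inj finj hA). exact: (imset_inj finj hB).
- move=> n A B t _ IHA _ IHB rA rB dA dB e1 e2 e3 tn hin hout S e.
  have sA : A \subset f @: S by rewrite -e; apply/subsetP => x xA; rewrite !inE xA orbT.
  have sB : B \subset f @: S by rewrite -e; apply/subsetP => x xA; rewrite !inE xA !orbT.
  have : t \in f @: S by rewrite -e setU11.
  case/imsetP => t0 _ et; subst t.
  have eA := img_pre sA; have eB := img_pre sB.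
  move: (f @^-1: A) (f @^-1: B) eA eB => A0 B0 eA eB; subst A B.
  rewrite -imsetU -imsetU1 in e; rewrite -(imset_inj finj e).
  rewrite !bdp_f in e1 e2 e3.
  rewrite -(imsetI (fi A0 B0)) -imsetU in e3.
  apply: (mol_arrow (n := n)).
  + exact: IHA. + exact: IHB.
  + exact/round_f. + exact/round_f.
  + by rewrite -dimS_f. + by rewrite -dimS_f.
  + exact: (imset_inj finj e1). + exact: (imset_inj finj e2).
  + exact: (imset_inj finj e3).
  + by rewrite -imsetU mem_imset in tn; last exact: finj.
  + move=> y; have := hin (f y); rewrite mem_imset ?fdim; last exact: finj.
    by rewrite -[og_in (f y) (f t0)]/(face false (f y) (f t0)) fface.
  + move=> y; have := hout (f y); rewrite mem_imset ?fdim; last exact: finj.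
    by rewrite -[og_out (f y) (f t0)]/(face true (f y) (f t0)) fface.
Qed.

Lemma mol_cemb (S : {set P}) : mol (f @: S) <-> mol S.
Proof. split; [move/mol_fV_aux; exact | exact: mol_f]. Qed.

End Transport.

Lemma cemb_morph (P Q : ogpos) (f : P -> Q) : cemb f -> is_morph f.
Proof.
move=> hf b x; split.
- by move=> y; rewrite (fface hf).
- by move=> y1 y2 _ _ /(finj hf).
- move=> z hz; have [y ez] := fsurj hf hz; subst z.
  by exists y => //; rewrite -(fface hf).
Qed.

Lemma face_cov (P : ogpos) b (y x : P) : face b y x -> cov y x.
Proof. by rewrite /cov; case: b => /= ->; rewrite ?orbT. Qed.

Lemma cov_face (P : ogpos) (y x : P) : cov y x -> exists b, face b y x.
Proof. by case/orP => h; [exists false | exists true]. Qed.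

Lemma morph_dim (P Q : ogpos) (f : P -> Q) : is_morph f -> forall x, og_dim (f x) = og_dim x.
Proof.
move=> hf x; move: {2}(og_dim x) (erefl (og_dim x)) => n; elim: n x => [|n IH] x dx.
  rewrite dx; case: (posnP (og_dim (f x))) => // /og_dim0 [z hz0].
  have [b hz] := cov_face hz0.
  have [_ _ /(_ z hz) [y hy _]] := hf b x.
  by have := og_dimS (face_cov hy); rewrite dx.
have [y hy0] : exists y, cov y x by apply: og_dim0; rewrite dx.
have [b hb] := cov_face hy0.
have dy : og_dim y = n by have := og_dimS (face_cov hb); rewrite dx => -[].
have [h1 _ _] := hf b x.
by rewrite (og_dimS (face_cov (h1 _ hb))) (IH y dy) dy dx.
Qed.

Lemma iso_cemb (P Q : ogpos) (f : P -> Q) : og_iso f -> cemb f.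
Proof.
case=> hm [g fK gK]; have fi := can_inj fK; split => //.
- exact: morph_dim.
- move=> b x y; apply/idP/idP; last by case: (hm b x) => h _ _; exact: h.
  move=> h; case: (hm b x) => _ _ /(_ _ h) [y' hy' /fi <-] //.
- by move=> b x z _; exists (g z); rewrite gK.
Qed.

Lemma cemb_inv (P Q : ogpos) (f : P -> Q) (g : Q -> P) :
  cemb f -> cancel f g -> cancel g f -> cemb g.
Proof.
move=> hf fK gK; split.
- exact: can_inj gK.
- by move=> x; rewrite -(fdim hf) gK.
- by move=> b x y; rewrite -(fface hf) !gK.
- by move=> b x z _; exists (f z); rewrite fK.
Qed.

Lemma morph_comp (P Q R : ogpos) (f : P -> Q) (g : Q -> R) :
  is_morph f -> is_morph g -> is_morph (g \o f).
Proof.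
move=> hf hg b x; have [f1 f2 f3] := hf b x; have [g1 g2 g3] := hg b (f x); split.
- by move=> y /f1 /g1.
- move=> y1 y2 h1 h2 /= e; apply: f2 => //; apply: g2 => //; exact: f1.
- move=> z /g3 [w /f3 [y hy <-] <-]; by exists y.
Qed.

Lemma cemb_subincl (P : ogpos) (S : {set P}) : cemb (@subincl P S).
Proof.
split.
- exact: val_inj.
- by [].
- by [].
- move=> b x z h.
  have zS : z \in clos S.
    apply: (clos_closed (valP x)); rewrite /cov.
    by case: b h => /= ->; rewrite ?orbT.
  by exists (exist _ z zS).
Qed.

Lemma img_subincl (P : ogpos) (S : {set P}) : (@subincl P S) @: setT = clos S.
Proof.
apply/setP => z; apply/imsetP/idP => [[x _ ->] | zS]; first exact: valP.
by exists (exist _ z zS).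
Qed.

Lemma img_bij (P Q : ogpos) (f : P -> Q) (g : Q -> P) : cancel g f -> f @: setT = setT.
Proof. by move=> gK; apply/setP => z; rewrite inE -(gK z) imset_f. Qed.

Lemma mol_sub (P : ogpos) (S : {set P}) : Defs.closed S -> (mol S <-> ismol (subog S)).
Proof.
move=> cS; have := mol_cemb (cemb_subincl S) setT.
by rewrite img_subincl clos_closed_eq.
Qed.

Lemma iso_id (P : ogpos) : og_iso (fun x : P => x).
Proof.
split; last by exists id.
move=> b x; split => //; by move=> z h; exists z.
Qed.

Lemma piece (V : ogpos) (c d : cell V) (A' : {set cdom c}) :
  isCell d -> Defs.closed A' -> cell_iso (restr A') d ->
  mol A' /\ (subinc (@subincl _ A') ->
    exists h : cdom d -> cdom c, subinc h /\ forall x, cmap c (h x) = cmap d x).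
Proof.
move=> [md _] cA [psi [[pm [psi' pK pK']] epsi]].
have ce := iso_cemb (conj pm (Bijective pK pK')).
have ce' := cemb_inv ce pK pK'.
have msub : ismol (subog A').
  apply: (proj1 (mol_cemb ce setT)); by rewrite (img_bij pK').
split; first exact/(mol_sub cA).
move=> hs; exists (@subincl _ A' \o psi'); split.
  apply: subinc_comp hs; apply: subinc_iso => //.
  split; [exact: cemb_morph ce' | exact: Bijective pK' pK].
by move=> x /=; rewrite -{2}(pK' x) epsi.
Qed.

Section Main.
Variables (U V : ogpos) (F : cell U -> cell V).
Hypothesis hF : strict_functor F.

Definition Good (P Q : ogpos) (f : P -> Q) :=
  ismol P /\ is_morph f /\
  forall g : Q -> U, isCell (mkcell g) ->
    exists h : cdom (F (mkcell (g \o f))) -> cdom (F (mkcell g)),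
      subinc h /\ forall x, cmap (F (mkcell g)) (h x) = cmap (F (mkcell (g \o f))) x.

Lemma good_paste (Q : ogpos) k (A B : {set Q}) (pd : paste_decomp k A B) (side : bool) :
  Good (@subincl Q (if side then B else A)).
Proof.
case: hF => hF1 hF2 hF3 hF4.
case: (pd) => mA mB eU eA eB.
have cA := closed_mol mA; have cB := closed_mol mB.
move S_def: (if side then B else A) => S.
have mS : mol S by case: side S_def => <-.
have cS := closed_mol mS.
split; first exact/(mol_sub cS).
split; first exact: cemb_morph (cemb_subincl S).
move=> g [mQ mg].
have cellX (X : {set Q}) : mol X -> isCell (mkcell (g \o @subincl Q X)).
  move=> mX; split; first exact/(mol_sub (closed_mol mX)).
  exact: morph_comp (cemb_morph (cemb_subincl X)) mg.
have hc : IsComp k (mkcell (g \o @subincl Q A)) (mkcell (g \o @subincl Q B)) (mkcell g).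
  exists A, B; split; first by split.
  by split; exists (fun x => x); split => //; exact: iso_id.
have [A' [B' [[clA clB eU' eA' eB'] [isoA isoB]]]] :=
  hF4 _ _ _ _ (cellX A mA) (cellX B mB) (conj mQ mg) hc.
have [mA' HA] := piece (hF1 _ (cellX A mA)) clA isoA.
have [mB' HB] := piece (hF1 _ (cellX B mB)) clB isoB.
have pd' : paste_decomp k A' B' by split.
clear cS mS; case: side S_def => <-.
  exact: HB (subinc_pasteR pd').
exact: HA (subinc_pasteL pd').
Qed.

Lemma good_all (P Q : ogpos) (f : P -> Q) : subinc f -> Good f.
Proof.
case: hF => hF1 hF2 hF3 hF4.
elim => {P Q f}.
- move=> P Q f mP mQ iso; split => //; split; first by case: iso.
  move=> g [_ mg].
  have c1 : isCell (mkcell (g \o f)) by split => //; apply: morph_comp mg; case: iso.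
  have c2 : isCell (mkcell g) by split.
  have ci : cell_iso (mkcell (g \o f)) (mkcell g) by exists f.
  have [h [hi eh]] := hF2 _ _ c1 c2 ci.
  exists h; split => //; apply: subinc_iso => //.
  + exact: (hF1 _ c1).1.
  + exact: (hF1 _ c2).1.
- move=> P Q R f g _ [mP [mf Hf]] _ [mQ [mg Hg]]; split => //; split.
    exact: morph_comp.
  move=> k [mR mk].
  have c1 : isCell (mkcell k) by split.
  have c2 : isCell (mkcell (k \o g)) by split => //; exact: morph_comp mg mk.
  have [h1 [s1 e1]] := Hg k c1.
  have [h2 [s2 e2]] := Hf (k \o g) c2.
  exists (h1 \o h2); split; first exact: subinc_comp s2 s1.
  by move=> x /=; rewrite e1 e2.
- move=> Q k A B pd; exact: (good_paste pd false).
- move=> Q k A B pd; exact: (good_paste pd true).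
Qed.

End Main.

Theorem mainTheorem19 (U V : ogpos) (F : cell U -> cell V) :
  ismol U -> ismol V -> strict_functor F -> active F ->
  forall (W : ogpos) (i : W -> U), submolecule i ->
    submolecule (cmap (F (mkcell i))).
Proof.
move=> mU mV hF [phi [phiiso ephi]] W i si.
have [_ [_ H]] := good_all hF si.
have cid : isCell (idcell U).
  split => //; exact: (iso_id U).1.
have [h [sh eh]] := H (fun x => x) cid.
have -> : cmap (F (mkcell i)) = phi \o h.
  apply: functional_extensionality => x /=.
  rewrite -[phi (h x)]/(cmap (idcell V) (phi (h x))) ephi; exact: (esym (eh x)).
apply: subinc_comp sh _; apply: subinc_iso => //.
by case: hF => hF1 _ _ _; exact: (hF1 _ cid).1.
Qed.
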